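(* Let $G$ be the threshold graph given by the binary sequence $(1^{p_l},0^{z_l},1^{p_{l-1}},0^{z_{l-1}},\dots,1^{p_1},0^{z_1},1^{p_0},\star)$, where $l\ge0$, $z_1,\dots,z_l$ are positive integers and $p_0,\dots,p_l$ are nonnegative integers. Then the number of pairwise non-isomorphic transitive orientations of $G$ is $\prod_{i=1}^{l}(p_i+1)$.
   Context: A binary sequence $(s_1,\dots,s_{n-1},\star)$ with $s_i\in\{0,1\}$ determines an undirected graph read right to left: start with one vertex (for $\star$), then for $i=n-1,\dots,1$ add a vertex $v_i$ which is isolated if $s_i=0$ and adjacent to all previously added vertices if $s_i=1$; $x^k$ denotes $k$ consecutive copies of $x$. Graphs arising this way are exactly the threshold graphs. A transitive orientation of $G$ is an assignment of a direction to each edge such that $x\to y$, $y\to z$ imply $x\to z$; two orientations are isomorphic if there is a digraph isomorphism between them. *)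

(* Defs.v *)
From mathcomp Require Import all_boot all_fingroup.
Set Implicit Arguments. Unset Strict Implicit. Unset Printing Implicit Defensive.

(* Vertex k : 'I_(size s).+1 is the vertex for position k+1 (0-indexed):
   k < size s is v_{k+1} (bit nth false s k), k = size s is the star.
   Vertex at position i is added after all vertices at positions j > i, so
   two distinct vertices are adjacent iff the bit at the smaller position is 1. *)
Definition tadj (s : seq bool) : rel 'I_(size s).+1 :=
  fun x y => (x != y) && nth false s (minn x y).
Arguments tadj s x y : clear implicits.

Definition thr_seq (l : nat) (p z : nat -> nat) : seq bool :=
  flatten [seq nseq (p i) true ++ nseq (z i) false | i <- rev (iota 1 l)]
  ++ nseq (p 0) true.

Definition is_orientation n (adj : rel 'I_n) (O : {set 'I_n * 'I_n}) : bool :=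
  [forall x, forall y,
     (((x, y) \in O) ==> adj x y) &&
     (adj x y ==> (((x, y) \in O) (+) ((y, x) \in O)))].

Definition is_transitive n (O : {set 'I_n * 'I_n}) : bool :=
  [forall x, forall y, forall z,
     ((x, y) \in O) && ((y, z) \in O) ==> ((x, z) \in O)].

Definition is_trans_orientation n (adj : rel 'I_n) (O : {set 'I_n * 'I_n}) :=
  is_orientation adj O && is_transitive O.

Definition digraph_iso n (O1 O2 : {set 'I_n * 'I_n}) : bool :=
  [exists f : {perm 'I_n}, forall x, forall y,
     ((x, y) \in O1) == ((f x, f y) \in O2)].

Definition num_trans_orient n (adj : rel 'I_n) : nat :=
  #|[set [set O2 | is_trans_orientation adj O2 && digraph_iso O1 O2]
     | O1 in [set O | is_trans_orientation adj O]]|.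

(* Main.v *)
Require Import Defs.
From mathcomp Require Import all_boot all_fingroup.
From mathcomp Require Import zify.
Set Implicit Arguments. Unset Strict Implicit. Unset Printing Implicit Defensive.

Section General.
Variable s : seq bool.
Local Notation n := (size s).
Local Notation V := 'I_n.+1.
Local Notation adj := (tadj s).
Definition Kv (x : V) := nth true s x.

Lemma adj_sym x y : adj x y = adj y x.
Proof. by rewrite /tadj eq_sym minnC. Qed.

Lemma adj_irr x : adj x x = false.
Proof. by rewrite /tadj eqxx. Qed.

Lemma adj_lt (x y : V) : x < y -> adj x y = Kv x.
Proof.
move=> lt; rewrite /tadj neq_ltn lt /= (minn_idPl (ltnW lt)) /Kv.
apply: set_nth_default; have := ltn_ord y; rewrite ltnS; exact: leq_trans.
Qed.

Lemma Kv_max : Kv ord_max.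
Proof. by rewrite /Kv nth_default. Qed.

Lemma adjKK x y : Kv x -> Kv y -> x != y -> adj x y.
Proof.
move=> Kx Ky; rewrite neq_ltn => /orP[lt|lt].
  by rewrite adj_lt.
by rewrite adj_sym adj_lt.
Qed.

Lemma adj_zero v a : ~~ Kv v -> adj a v -> Kv a && (a < v).
Proof.
move=> Kv0; case: (ltngtP a v) => [lt|lt|/val_inj ->].
- by rewrite adj_lt // => ->.
- by rewrite adj_sym adj_lt // (negbTE Kv0).
- by rewrite adj_irr.
Qed.

Lemma nadj_zz x y : ~~ Kv x -> ~~ Kv y -> adj x y = false.
Proof.
move=> Kx Ky; apply/negbTE/negP => /(adj_zero Ky) /andP[Kx' _].
by rewrite Kx' in Kx.
Qed.

Definition Nb x := [set y | adj x y].

Lemma T1 (x y : V) : x < y -> ~~ adj x y -> Nb x \subset Nb y.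
Proof.
move=> lt nadj; have Kx : ~~ Kv x by rewrite -(adj_lt lt).
apply/subsetP => u; rewrite !inE => axu.
case: (ltngtP u x) => [ux|xu|/val_inj eux].
- have uy : u < y by apply: ltn_trans lt.
  by rewrite adj_sym adj_lt // -(adj_lt ux) adj_sym.
- by rewrite adj_lt // (negbTE Kx) in axu.
- by rewrite eux adj_irr in axu.
Qed.

Lemma T2 (x y : V) : x < y -> adj x y -> Nb y :\ x \subset Nb x :\ y.
Proof.
move=> lt axy; have Kx : Kv x by rewrite -(adj_lt lt).
apply/subsetP => u; rewrite !inE => /andP[ux ayu].
have uy : u != y by apply: contraTneq ayu => ->; rewrite adj_irr.
rewrite uy /=.
case: (ltngtP u x) => [ux'|xu|/val_inj eux].
- have uy' : u < y by apply: ltn_trans lt.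
  by rewrite adj_sym adj_lt // -(adj_lt uy') adj_sym.
- by rewrite adj_lt.
- by rewrite eux eqxx in ux.
Qed.

Definition TO (O : {set V * V}) := is_trans_orientation adj O.

Lemma TO_arc O x y : TO O -> (x, y) \in O -> adj x y.
Proof.
by case/andP=> /forallP H _ xy; have /forallP/(_ y)/andP[/implyP/(_ xy) ->] := H x.
Qed.

Lemma TO_edge O x y : TO O -> adj x y -> ((x, y) \in O) (+) ((y, x) \in O).
Proof.
by case/andP=> /forallP H _ xy; have /forallP/(_ y)/andP[_ /implyP/(_ xy) ->] := H x.
Qed.

Lemma TO_trans O x y z : TO O -> (x, y) \in O -> (y, z) \in O -> (x, z) \in O.
Proof.
case/andP=> _ /forallP/(_ x)/forallP/(_ y)/forallP/(_ z)/implyP H xy yz.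
by apply: H; rewrite xy yz.
Qed.

Lemma TO_irr O x : TO O -> (x, x) \notin O.
Proof. by move=> tO; apply/negP => /(TO_arc tO); rewrite adj_irr. Qed.

Lemma adj_arc O x y : TO O -> adj x y = ((x, y) \in O) || ((y, x) \in O).
Proof.
move=> tO; apply/idP/idP.
  by move=> /(TO_edge tO); case: ((x, y) \in O); case: ((y, x) \in O).
by case/orP => [/(TO_arc tO) // | /(TO_arc tO)]; rewrite adj_sym.
Qed.

Definition down (O : {set V * V}) (v : V) := [set a | (a, v) \in O].
Definition up (O : {set V * V}) (v : V) := [set a | (v, a) \in O].

Definition inv (O : {set V * V}) : {ffun V -> 'I_n.+2} :=
  [ffun v => if Kv v then ord0 else inord #|down O v|].

Lemma twin O x y : TO O -> ~~ adj x y -> Nb x = Nb y -> down O x = down O y.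
Proof.
move=> tO.
have H : forall x y, ~~ adj x y -> Nb x = Nb y -> down O x \subset down O y.
  move=> {}x {}y nxy eN; apply/subsetP => a; rewrite !inE => ax.
  have : a \in Nb y by rewrite -eN inE adj_sym (TO_arc tO ax).
  rewrite inE => /(TO_edge tO).
  case ya: ((y, a) \in O) => /=; last by [].
  have := TO_trans tO ya ax => /(TO_arc tO); by rewrite adj_sym (negbTE nxy).
move=> nxy eN; apply/eqP; rewrite eqEsubset H //= H // 1?adj_sym //.
Qed.

Lemma down_card_le O v : #|down O v| < n.+2.
Proof. by have := max_card (mem (down O v)); rewrite card_ord. Qed.

Lemma iso_inv O1 O2 (f : {perm V}) : TO O1 -> TO O2 ->
  (forall x y, ((x, y) \in O1) = ((f x, f y) \in O2)) -> inv O1 = inv O2.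
Proof.
move=> t1 t2 H.
have adjf x y : adj (f x) (f y) = adj x y.
  by rewrite (adj_arc (f x) (f y) t2) (adj_arc x y t1) !H.
have imgE (P : V -> V -> bool) (Q : V -> V -> bool) v :
   (forall a, P (f a) (f v) = Q a v) -> [set a | P a (f v)] = f @: [set a | Q a v].
  move=> PQ; apply/setP => a; rewrite -[a](permKV f) mem_imset ?inE //; exact: perm_inj.
have dE v : down O2 (f v) = f @: down O1 v.
  by apply: (imgE (fun a b => (a, b) \in O2) (fun a b => (a, b) \in O1)) => a; rewrite H.
have NE v : Nb (f v) = f @: Nb v.
  rewrite /Nb; have -> : [set y | adj (f v) y] = [set y | adj y (f v)].
    by apply/setP => y; rewrite !inE adj_sym.
  have -> : [set y | adj v y] = [set y | adj y v].
    by apply/setP => y; rewrite !inE adj_sym.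
  by apply: (imgE adj adj) => a; rewrite adjf.
apply/ffunP => v; rewrite !ffunE; case: ifP => // Kv0.
have Kv0' : ~~ Kv v by rewrite Kv0.
congr inord.
set w := f v.
have cNb : #|Nb w| = #|Nb v| by rewrite /w NE card_imset //; exact: perm_inj.
have cd : #|down O2 w| = #|down O1 v| by rewrite /w dE card_imset //; exact: perm_inj.
rewrite -cd.
case avw: (adj v w).
  exfalso.
  have /andP[Kw wv] : Kv w && (w < v) by apply: adj_zero; rewrite // adj_sym.
  have sub : Nb v :\ w \subset Nb w :\ v by apply: T2; rewrite // adj_sym.
  have eqs : Nb v :\ w = Nb w :\ v.
    apply/eqP; rewrite eqEcard sub /=.
    have c1 := cardsD1 w (Nb v); have c2 := cardsD1 v (Nb w).
    rewrite !inE avw /= in c1; rewrite !inE adj_sym avw /= cNb c1 in c2.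
    by move: c2 => /eqP; rewrite eqn_add2l => /eqP ->.
  have : ord_max \in Nb w :\ v.
    have wm : w != ord_max.
      by apply/eqP => e; move: wv; rewrite e /= ltnNge -ltnS ltn_ord.
    have vm : ord_max != v.
      by apply/eqP => e; rewrite -e Kv_max in Kv0.
    by rewrite !inE vm adjKK ?Kv_max.
  rewrite -eqs !inE => /andP[_]; rewrite adj_sym => /(adj_zero Kv0') /andP[_].
  by rewrite ltnNge -ltnS ltn_ord.
have eN : Nb v = Nb w.
  case: (ltngtP v w) => [lt|lt|/val_inj ->] //.
    have sb : Nb v \subset Nb w by apply: T1; rewrite // avw.
    by apply/eqP; rewrite eqEcard sb cNb leqnn.
  have sb : Nb w \subset Nb v by apply: T1; rewrite // adj_sym avw.
  by apply/eqP; rewrite eq_sym eqEcard sb cNb leqnn.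
by rewrite (@twin O2 v w t2 (negbT avw) eN).
Qed.

Definition KS := [set x : V | Kv x].
Definition rank (O : {set V * V}) (x : V) := #|[set y | Kv y && ((y, x) \in O)]|.

Lemma tot O x y : TO O -> Kv x -> Kv y -> x != y -> ((x, y) \in O) (+) ((y, x) \in O).
Proof. by move=> tO Kx Ky xy; apply: (TO_edge tO); apply: adjKK. Qed.

Lemma rank_lt1 O x y : TO O -> Kv x -> (x, y) \in O -> rank O x < rank O y.
Proof.
move=> tO Kx xy; apply: proper_card; apply/properP; split.
  apply/subsetP => b; rewrite !inE => /andP[-> bx] /=; exact: TO_trans bx xy.
by exists x; rewrite !inE ?Kx ?xy ?(negbTE (TO_irr x tO)).
Qed.

Lemma rank_lt O x y : TO O -> Kv x -> Kv y -> ((x, y) \in O) = (rank O x < rank O y).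
Proof.
move=> tO Kx Ky; apply/idP/idP; first exact: rank_lt1.
case: (eqVneq x y) => [-> | nxy]; first by rewrite ltnn.
move=> lt; have := tot tO Kx Ky nxy.
case: ((x, y) \in O) => //= yx.
by have := rank_lt1 tO Ky yx; rewrite ltnNge (ltnW lt).
Qed.

Lemma rank_inj O x y : TO O -> Kv x -> Kv y -> rank O x = rank O y -> x = y.
Proof.
move=> tO Kx Ky e; apply/eqP; apply: contraT => nxy.
have := tot tO Kx Ky nxy; rewrite !rank_lt // e ltnn //.
Qed.

Lemma seg O (S : {set V}) x : TO O -> S \subset KS ->
  (forall a b, a \in S -> Kv b -> (b, a) \in O -> b \in S) -> Kv x ->
  (x \in S) = (rank O x < #|S|).
Proof.
move=> tO SK cl Kx; case xS: (x \in S).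
  apply/esym; apply: proper_card; apply/properP; split.
    apply/subsetP => b; rewrite !inE => /andP[Kb bx]; exact: cl bx.
  by exists x; rewrite // !inE Kx (negbTE (TO_irr x tO)).
apply/esym/negbTE; rewrite -leqNgt; apply: subset_leq_card.
apply/subsetP => a aS; rewrite inE.
have Ka : Kv a by have := subsetP SK a aS; rewrite inE.
rewrite Ka /=.
have ax : a != x by apply: contraTneq aS => ->; rewrite xS.
have := tot tO Ka Kx ax; case: ((a, x) \in O) => //= xa.
by rewrite (cl _ _ aS Kx xa) in xS.
Qed.

Lemma down_rank O v a : TO O -> ~~ Kv v ->
  ((a, v) \in O) = Kv a && (rank O a < #|down O v|).
Proof.
move=> tO Kv0; case Ka: (Kv a) => /=.
  rewrite -(seg tO) //.
  - by rewrite inE.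
  - by apply/subsetP => x1; rewrite !inE => /(TO_arc tO) /(adj_zero Kv0) /andP[].
  - move=> x1 x2; rewrite !inE => x1v _ x21; exact: TO_trans x21 x1v.
apply/negbTE/negP => /(TO_arc tO) /(adj_zero Kv0); by rewrite Ka.
Qed.

Lemma up_sub O v : TO O -> ~~ Kv v -> up O v \subset KS.
Proof.
move=> tO Kv0; apply/subsetP => b; rewrite !inE => /(TO_arc tO).
by rewrite adj_sym => /(adj_zero Kv0) /andP[].
Qed.

Lemma up_rank O v a : TO O -> ~~ Kv v ->
  ((v, a) \in O) = Kv a && (#|KS| - #|up O v| <= rank O a).
Proof.
move=> tO Kv0; case Ka: (Kv a) => /=; last first.
  apply/negbTE/negP => /(TO_arc tO); rewrite adj_sym => /(adj_zero Kv0).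
  by rewrite Ka.
have cC : #|KS :\: up O v| = #|KS| - #|up O v|.
  by rewrite cardsD (setIidPr (up_sub tO Kv0)).
rewrite -cC leqNgt -(seg tO).
- by rewrite !inE Ka andbT negbK.
- exact: subsetDl.
- move=> x1 x2; rewrite !inE => /andP[vc _] -> bc; rewrite andbT.
  by apply/negP => vb; move/negP: vc; apply; exact: TO_trans vb bc.
- done.
Qed.

Lemma up_card O v : TO O -> ~~ Kv v -> #|up O v| = #|Nb v| - #|down O v|.
Proof.
move=> tO Kv0.
have -> : Nb v = up O v :|: down O v.
  by apply/setP => a; rewrite !inE (adj_arc v a tO).
rewrite cardsU.
have -> : up O v :&: down O v = set0.
  apply/setP => a; rewrite !inE; apply/negbTE/negP => /andP[va av].
  by have := TO_irr v tO; rewrite (TO_trans tO va av).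
by rewrite cards0 subn0 addnK.
Qed.

Lemma rank_ltK O x : TO O -> Kv x -> rank O x < #|KS|.
Proof.
move=> tO Kx; apply: proper_card; apply/properP; split.
  by apply/subsetP => b; rewrite !inE => /andP[].
by exists x; rewrite !inE ?Kx // (negbTE (TO_irr x tO)).
Qed.

Lemma KS_le : #|KS| < n.+2.
Proof. by have := max_card (mem KS); rewrite card_ord. Qed.

Lemma rank_surj O r : TO O -> r < #|KS| -> exists2 y, Kv y & rank O y = r.
Proof.
move=> tO rlt.
pose g (y : V) : 'I_n.+2 := inord (rank O y).
have ginj : {in KS &, injective g}.
  move=> x y; rewrite !inE => Kx Ky e; apply: (rank_inj tO Kx Ky).
  have := congr1 val e; rewrite /g /= !inordK //.
  - exact: ltn_trans (rank_ltK tO Ky) KS_le.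
  - exact: ltn_trans (rank_ltK tO Kx) KS_le.
have kle : #|KS| <= n.+2 by apply: ltnW KS_le.
pose J := (widen_ord kle) @: [set: 'I_#|KS|].
have cJ : #|J| = #|KS|.
  rewrite card_imset; first by rewrite cardsT; exact: card_ord.
  by move=> a b /(congr1 val) /= /val_inj.
have sub : g @: KS \subset J.
  apply/subsetP => _ /imsetP[y Ky ->]; rewrite inE in Ky.
  have ry := rank_ltK tO Ky.
  apply/imsetP; exists (Ordinal ry) => //; apply: val_inj.
  by rewrite /g /= inordK //; exact: (ltn_trans ry KS_le).
have eJ : g @: KS = J by apply/eqP; rewrite eqEcard sub /= cJ (card_in_imset ginj).
have : widen_ord kle (Ordinal rlt) \in g @: KS by rewrite eJ imset_f.
case/imsetP => y; rewrite inE => Ky /(congr1 val) /= ey; exists y => //.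
move: ey; rewrite /g inordK // ; exact: (ltn_trans (rank_ltK tO Ky) KS_le).
Qed.

Lemma inv_iso O1 O2 : TO O1 -> TO O2 -> inv O1 = inv O2 -> digraph_iso O1 O2.
Proof.
move=> t1 t2 eI.
have eD v : ~~ Kv v -> #|down O1 v| = #|down O2 v|.
  move=> Kv0; have := congr1 (fun F : {ffun V -> 'I_n.+2} => val (F v)) eI.
  rewrite /= /inv !ffunE (negbTE Kv0).
  by rewrite /= !inordK // down_card_le.
pose f0 (x : V) := if Kv x then odflt x [pick y | Kv y && (rank O2 y == rank O1 x)] else x.
have f0K x : Kv x -> Kv (f0 x) && (rank O2 (f0 x) == rank O1 x).
  move=> Kx; rewrite /f0 Kx; case: pickP => [y //|none].
  have [y Ky ry] := rank_surj t2 (rank_ltK t1 Kx).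
  by have := none y; rewrite Ky ry eqxx.
have f0N x : ~~ Kv x -> f0 x = x by move=> Kx; rewrite /f0 (negbTE Kx).
have f0inj : injective f0.
  move=> x y; case Kx: (Kv x); case Ky: (Kv y).
  - move=> e; apply: (rank_inj t1 Kx Ky).
    have /andP[_ /eqP <-] := f0K x Kx; have /andP[_ /eqP <-] := f0K y Ky.
    by rewrite e.
  - have /andP[Kfx _] := f0K x Kx; rewrite (f0N y) ?Ky // => e.
    by rewrite e Ky in Kfx.
  - have /andP[Kfy _] := f0K y Ky; rewrite (f0N x) ?Kx // => e.
    by rewrite -e Kx in Kfy.
  - by rewrite (f0N x) ?Kx // (f0N y) ?Ky.
apply/existsP; exists (perm f0inj); apply/forallP => x; apply/forallP => y.
rewrite !permE; apply/eqP.
case Kx: (Kv x); case Ky: (Kv y).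
- have /andP[Kfx /eqP rx] := f0K x Kx; have /andP[Kfy /eqP ry] := f0K y Ky.
  by rewrite (rank_lt t1) // (rank_lt t2) // rx ry.
- have /andP[Kfx /eqP rx] := f0K x Kx; have Ky' : ~~ Kv y by rewrite Ky.
  by rewrite (f0N y) // (down_rank _ t1) // (down_rank _ t2) // Kx Kfx rx eD.
- have /andP[Kfy /eqP ry] := f0K y Ky; have Kx' : ~~ Kv x by rewrite Kx.
  rewrite (f0N x) // (up_rank _ t1) // (up_rank _ t2) // Ky Kfy ry.
  by rewrite !up_card // eD.
- have Kx' : ~~ Kv x by rewrite Kx.
  have Ky' : ~~ Kv y by rewrite Ky.
  rewrite (f0N x) // (f0N y) //.
  by apply/idP/idP => [/(TO_arc t1)|/(TO_arc t2)]; rewrite nadj_zz.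
Qed.

Definition F (L : {set V}) : {ffun V -> 'I_n.+2} :=
  [ffun v => if Kv v then ord0 else inord #|[set a | adj a v && (a \in L)]|].

Definition lowO (O : {set V * V}) := [set a | [exists w, ~~ Kv w && ((a, w) \in O)]].

Lemma inv_F O : TO O -> inv O = F (lowO O).
Proof.
move=> tO; apply/ffunP => v; rewrite !ffunE; case: ifP => // Kv0.
have Kv0' : ~~ Kv v by rewrite Kv0.
congr inord; apply: eq_card => a; rewrite !inE.
apply/idP/idP.
  move=> av; rewrite (TO_arc tO av) /=; apply/existsP; exists v; by rewrite Kv0' av.
case/andP => adv /existsP[w /andP[Kw aw]].
have := TO_edge tO adv; case: ((a, v) \in O) => //= va.
have := TO_arc tO (TO_trans tO va aw); by rewrite nadj_zz.
Qed.

Definition key (L : {set V}) (x : V) : nat := if x \in L then nat_of_ord x else n.*2.+2 - x.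

Definition arcL (L : {set V}) (x y : V) :=
  adj x y && (if Kv x then (if Kv y then key L x < key L y else x \in L) else y \notin L).

Definition OL (L : {set V}) : {set V * V} := [set xy | arcL L xy.1 xy.2].

Lemma key_lo (L : {set V}) (x : V) : x \in L -> key L x <= n.
Proof. by move=> xL; rewrite /key xL -ltnS ltn_ord. Qed.

Lemma key_hi (L : {set V}) (x : V) : x \notin L -> n.+2 <= key L x.
Proof.
move=> /negbTE xL; rewrite /key xL -addnn; have := ltn_ord x; lia.
Qed.

Lemma key_inj (L : {set V}) (x y : V) : key L x = key L y -> x = y.
Proof.
move=> e; apply: ord_inj.
have := ltn_ord x; have := ltn_ord y.
move: e; rewrite /key -addnn; case: (x \in L); case: (y \in L); lia.
Qed.

Lemma key_hi_lt (L : {set V}) (x y : V) : x \notin L -> y \notin L -> (key L x < key L y) = (y < x).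
Proof.
move=> xL yL; rewrite /key (negbTE xL) (negbTE yL) -addnn.
have := ltn_ord x; have := ltn_ord y; move=> h1 h2; apply/idP/idP; lia.
Qed.

Lemma OLE L x y : ((x, y) \in OL L) = arcL L x y.
Proof. by rewrite inE. Qed.

Lemma TO_OL L : TO (OL L).
Proof.
apply/andP; split.
  apply/forallP => x; apply/forallP => y; rewrite !OLE; apply/andP; split.
    by apply/implyP => /andP[].
  apply/implyP => axy; rewrite /arcL axy adj_sym axy /=.
  case Kx: (Kv x); case Ky: (Kv y).
  - have xy : x != y by apply: contraTneq axy => ->; rewrite adj_irr.
    have kxy : key L x != key L y by apply: contra xy => /eqP /key_inj ->.
    by case: ltngtP kxy.
  - by case: (x \in L).
  - by case: (y \in L).
  - by rewrite nadj_zz ?Kx ?Ky in axy.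
apply/forallP => x; apply/forallP => y; apply/forallP => z.
apply/implyP => /andP[]; rewrite !OLE /arcL.
case/andP => axy Hxy /andP[ayz Hyz].
case Ky: (Kv y) in Hxy Hyz.
- case Kx: (Kv x) in Hxy.
  + case Kz: (Kv z) in Hyz.
    * have kxz : key L x < key L z by apply: ltn_trans Hxy Hyz.
      have xz : x != z by apply: contraTneq kxz => ->; rewrite ltnn.
      by rewrite adjKK ?Kx ?Kz.
    * have /andP[_ yz] : Kv y && (y < z) by apply: adj_zero; rewrite ?Kz.
      have xL : x \in L.
        apply: contraLR Hxy => xL; have h1 := key_hi xL; have h2 := key_lo Hyz; lia.
      have xy : x < y by move: Hxy; rewrite /key xL Hyz.
      have xz : x < z := ltn_trans xy yz.
      by rewrite adj_lt // Kx Kz xL.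
  + have /andP[_ yx] : Kv y && (y < x) by apply: adj_zero; rewrite ?Kx // adj_sym.
    case Kz: (Kv z) in Hyz.
    * have zL : z \notin L.
        apply: contraL Hyz => zL; have h1 := key_hi Hxy; have h2 := key_lo zL; lia.
      have zy : z < y by rewrite -(key_hi_lt Hxy zL).
      have zx : z < x := ltn_trans zy yx.
      by rewrite adj_sym adj_lt // Kx Kz zL.
    * by rewrite Hyz in Hxy.
- have /andP[Kx _] : Kv x && (x < y) by apply: adj_zero; rewrite ?Ky.
  have /andP[Kz _] : Kv z && (z < y) by apply: adj_zero; rewrite ?Ky // adj_sym.
  rewrite Kx in Hxy.
  have xz : x != z by apply: contraTneq Hxy => ->.
  rewrite adjKK // Kx Kz /=.
  have h1 := key_hi Hyz; have h2 := key_lo Hxy; lia.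
Qed.

Lemma inv_OL L : inv (OL L) = F L.
Proof.
apply/ffunP => v; rewrite !ffunE; case: ifP => // Kv0.
have Kv0' : ~~ Kv v by rewrite Kv0.
congr inord; apply: eq_card => a; rewrite !inE /arcL Kv0.
case av: (adj a v) => //=.
by have /andP[-> _] := adj_zero Kv0' av.
Qed.

Definition TOset := [set O | TO O].

Lemma iso_iff O1 O2 : TO O1 -> TO O2 -> digraph_iso O1 O2 = (inv O1 == inv O2).
Proof.
move=> t1 t2; apply/idP/eqP; last exact: inv_iso.
case/existsP => f /forallP H; apply: (iso_inv (f := f)) => // x y.
by have /forallP/(_ y)/eqP := H x.
Qed.
End General.

Lemma size_undup_ker (T R1 R2 : eqType) (f : T -> R1) (g : T -> R2) (e : seq T) :
  {in e &, forall x y, (f x == f y) = (g x == g y)} ->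
  size (undup [seq f x | x <- e]) = size (undup [seq g x | x <- e]).
Proof.
elim: e => //= x e IH H.
have H' : {in e &, forall x y, (f x == f y) = (g x == g y)}.
  by move=> a b ae be; apply: H; rewrite inE ?ae ?be orbT.
have -> : (f x \in [seq f x | x <- e]) = (g x \in [seq g x | x <- e]).
  apply/mapP/mapP => [[y ye /eqP exy]|[y ye /eqP exy]]; exists y => //; apply/eqP.
    by rewrite -H ?inE ?ye ?eqxx ?orbT.
  by rewrite H ?inE ?ye ?eqxx ?orbT.
by case: ifP => _ //=; rewrite IH.
Qed.

Lemma card_imset_undup (T R : finType) (f : T -> R) (A : {pred T}) :
  #|f @: A| = size (undup [seq f x | x <- enum A]).
Proof.
rewrite -(card_uniqP (undup_uniq _)); apply: eq_card => y.
rewrite mem_undup; apply/imsetP/mapP => [[x xA ->]|[x xA ->]]; exists x => //.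
  by rewrite mem_enum.
by rewrite -mem_enum.
Qed.

Lemma size_undup_eqmem (T : eqType) (s1 s2 : seq T) : s1 =i s2 ->
  size (undup s1) = size (undup s2).
Proof.
move=> e; apply: perm_size; apply: uniq_perm; rewrite ?undup_uniq // => x.
by rewrite !mem_undup.
Qed.

Lemma num_inv s : num_trans_orient (tadj s) = #|inv (s:=s) @: TOset s|.
Proof.
rewrite /num_trans_orient !card_imset_undup; apply: size_undup_ker.
move=> O1 O1'; rewrite !mem_enum !inE => t1 t1'.
apply/eqP/eqP => [e|e].
  apply/eqP; rewrite -iso_iff //.
  have : O1' \in [set O2 | is_trans_orientation (tadj s) O2 && digraph_iso O1' O2].
    by rewrite inE t1' iso_iff // eqxx.
  by rewrite -e inE => /andP[].
apply/setP => O2; rewrite !inE; case t2: (is_trans_orientation (tadj s) O2) => //=.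
by rewrite !iso_iff // e.
Qed.

Lemma inv_img s : inv (s:=s) @: TOset s = F (s:=s) @: setT.
Proof.
apply/setP => G; apply/imsetP/imsetP => [[O tO ->]|[L _ ->]].
  by rewrite inE in tO; exists (lowO O) => //; rewrite inv_F.
by exists (OL L); rewrite ?inE ?TO_OL // inv_OL.
Qed.

Definition prof (s m : seq bool) : seq nat :=
  [seq (if nth true s v then 0 else count (fun a => nth true s a && nth false m a) (iota 0 v))
  | v <- iota 0 (size s)].

Fixpoint masks k : seq (seq bool) :=
  if k is k'.+1 then [seq b :: m | b <- [:: true; false], m <- masks k'] else [:: [::]].

Lemma mem_masks k m : (m \in masks k) = (size m == k).
Proof.
elim: k m => [|k IH] [|b m] //=.
- by apply/negbTE/negP; rewrite !mem_cat => /or3P[] // /mapP[? _].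
- rewrite !mem_cat orbF eqSS -IH.
  have inj : forall c : bool, injective (cons c) by move=> c x y [].
  case: b; rewrite !(mem_map (inj _)).
    by apply/orP/idP => [[] // /mapP[? _] //|->]; left.
  by apply/orP/idP => [[] // /mapP[? _] //|->]; right.
Qed.

Definition cnt s := size (undup [seq prof s m | m <- masks (size s)]).

Lemma card_count N (P : nat -> bool) : #|[set a : 'I_N | P a]| = count P (iota 0 N).
Proof.
rewrite -val_enum_ord count_map -size_filter.
rewrite -(card_uniqP (filter_uniq _ (enum_uniq _))); apply: eq_card => a.
by rewrite inE mem_filter mem_enum andbT.
Qed.

Lemma count_lt N v (P : nat -> bool) : v <= N ->
  count (fun a => (a < v) && P a) (iota 0 N) = count P (iota 0 v).
Proof.
move=> vN; rewrite -(subnKC vN) iotaD count_cat add0n.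
have h1 : count (fun a => (a < v) && P a) (iota 0 v) = count P (iota 0 v).
  by apply: eq_in_count => a; rewrite mem_iota => /andP[_ ->].
have h2 : count (fun a => (a < v) && P a) (iota v (N - v)) = 0.
  rewrite (eq_in_count (a2 := pred0)) ?count_pred0 // => a.
  by rewrite mem_iota => /andP[h _]; rewrite ltnNge h.
by rewrite h1 h2 addn0.
Qed.

Definition maskof n (L : {set 'I_n.+1}) := mkseq (fun i => inord i \in L) n.

Lemma F_prof s (L : {set 'I_(size s).+1}) (v : 'I_(size s).+1) :
  nat_of_ord (F L v) = nth 0 (prof s (maskof L)) v.
Proof.
rewrite ffunE /prof /Kv.
case: (ltnP v (size s)) => vn; last first.
  by rewrite !nth_default ?size_map ?size_iota.
rewrite (nth_map 0) ?size_iota // nth_iota // add0n.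
case: ifP => // Kv0.
rewrite inordK; last first.
  by have := max_card (mem [set a | tadj s a v && (a \in L)]); rewrite card_ord.
rewrite -(count_lt _ (ltnW (ltn_ord v))).
rewrite -(@card_count (size s).+1 (fun a => (a < v) && (nth true s a && nth false (maskof L) a))).
apply: eq_card => a; rewrite !inE.
case: (ltngtP a v) => [av|av|/val_inj ->].
- rewrite adj_lt //= /maskof nth_mkseq ?inord_val //.
  exact: ltn_trans av vn.
- by rewrite adj_sym adj_lt // /Kv Kv0.
- by rewrite adj_irr.
Qed.

Lemma num_cnt s : num_trans_orient (tadj s) = cnt s.
Proof.
rewrite num_inv inv_img card_imset_undup.
rewrite (size_undup_ker (g := fun L => prof s (maskof L))).
  rewrite /cnt; apply: size_undup_eqmem => x.
  apply/mapP/mapP => [[L _ ->]|[m]].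
    by exists (maskof L) => //; rewrite mem_masks size_mkseq.
  rewrite mem_masks => /eqP sm ->.
  exists [set i : 'I_(size s).+1 | nth false m i]; first by rewrite mem_enum inE.
  congr prof; apply: (@eq_from_nth _ false); first by rewrite /maskof size_mkseq.
  move=> i ilt; rewrite /maskof nth_mkseq -?sm // inE inordK //.
  by rewrite ltnS ltnW // -sm.
move=> L L' _ _; apply/eqP/eqP => [e|e].
  have e' : forall v, nth 0 (prof s (maskof L)) v = nth 0 (prof s (maskof L')) v.
    move=> v; case: (ltnP v (size s).+1) => vlt.
      by rewrite -(F_prof L (Ordinal vlt)) -(F_prof L' (Ordinal vlt)) e.
    by rewrite !nth_default ?size_map ?size_iota // ltnW.
  by apply: (@eq_from_nth _ 0); rewrite ?size_map ?size_iota // => i _; apply: e'.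
apply/ffunP => v; apply: ord_inj; by rewrite !F_prof e.
Qed.

Definition cc (u m : seq bool) := count (fun a => nth true u a && nth false m a) (iota 0 (size u)).
Definition addz (t : seq bool) (c : nat) (y : seq nat) :=
  [seq (if nth true t w then nth 0 y w else nth 0 y w + c) | w <- iota 0 (size t)].

Lemma map_constE (T : Type) (c : nat) (e : seq T) : [seq c | _ <- e] = nseq (size e) c.
Proof. by elim: e => //= x e ->. Qed.

Lemma count_split u t m k :
  count (fun a => nth true (u ++ t) a && nth false m a) (iota 0 (size u + k)) =
  cc u m + count (fun a => nth true t a && nth false (drop (size u) m) a) (iota 0 k).
Proof.
rewrite iotaD count_cat /cc; congr (_ + _).
  apply: eq_in_count => a; rewrite mem_iota => /andP[_ au].
  by rewrite nth_cat au.
have -> : iota (0 + size u) k = [seq size u + i | i <- iota 0 k].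
  by rewrite -iotaDl addn0 add0n.
rewrite count_map.
apply: eq_in_count => a _ /=.
by rewrite nth_cat ltnNge leq_addr /= addKn nth_drop.
Qed.

Lemma cc_cat u t m : cc (u ++ t) m = cc u m + cc t (drop (size u) m).
Proof. by rewrite {1}/cc size_cat count_split. Qed.

Lemma prof_cat u t m :
  prof (u ++ t) m = prof u m ++ addz t (cc u m) (prof t (drop (size u) m)).
Proof.
rewrite {1}/prof size_cat iotaD map_cat; congr (_ ++ _).
  apply/eq_in_map => v; rewrite mem_iota => /andP[_ vu] /=.
  rewrite nth_cat vu; case: ifP => // _.
  apply: eq_in_count => a; rewrite mem_iota => /andP[_ av].
  by rewrite nth_cat (ltn_trans av vu).
have -> : iota (0 + size u) (size t) = [seq size u + i | i <- iota 0 (size t)].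
  by rewrite -iotaDl addn0 add0n.
rewrite -map_comp /addz; apply/eq_in_map => w.
rewrite mem_iota => /andP[_ wt] /=.
rewrite nth_cat ltnNge leq_addr /= addKn /prof (nth_map 0) ?size_iota //.
rewrite nth_iota // add0n; case: ifP => // _.
by rewrite count_split addnC.
Qed.

Lemma prof_ones p m : prof (nseq p true) m = nseq p 0.
Proof.
rewrite /prof size_nseq (eq_map (g := fun _ => 0)) ?map_constE ?size_iota //.
by move=> v; rewrite nth_nseq if_same.
Qed.

Lemma prof_zeros z m : prof (nseq z false) m = nseq z 0.
Proof.
rewrite /prof size_nseq.
transitivity [seq 0 | _ <- iota 0 z]; last by rewrite map_constE size_iota.
apply/eq_in_map.
move=> v; rewrite mem_iota => /andP[_ vz]; rewrite nth_nseq vz /=.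
rewrite (eq_in_count (a2 := pred0)) ?count_pred0 // => a.
by rewrite mem_iota nth_nseq => /andP[_ av]; rewrite (ltn_trans av vz).
Qed.

Lemma cc_ones p m : cc (nseq p true) m = count (fun a => nth false m a) (iota 0 p).
Proof.
rewrite /cc size_nseq; apply: eq_in_count => a; rewrite mem_iota => /andP[_ ap].
by rewrite nth_nseq ap.
Qed.

Lemma cc_zeros z m : cc (nseq z false) m = 0.
Proof.
rewrite /cc (eq_in_count (a2 := pred0)) ?count_pred0 // => a.
by rewrite size_nseq mem_iota nth_nseq => /andP[_ ->].
Qed.

Lemma addz_zeros z c : addz (nseq z false) c (nseq z 0) = nseq z c.
Proof.
rewrite /addz size_nseq.
transitivity [seq c | _ <- iota 0 z]; last by rewrite map_constE size_iota.
apply/eq_in_map.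
by move=> w; rewrite mem_iota => /andP[_ wz]; rewrite !nth_nseq wz.
Qed.

Lemma prof_block p z t m :
  prof (nseq p true ++ nseq z false ++ t) m =
  nseq p 0 ++ nseq z (count (fun a => nth false m a) (iota 0 p)) ++
  addz t (count (fun a => nth false m a) (iota 0 p)) (prof t (drop (p + z) m)).
Proof.
rewrite catA prof_cat prof_cat prof_ones prof_zeros cc_cat cc_ones cc_zeros addn0.
by rewrite !size_cat !size_nseq addz_zeros catA.
Qed.

Lemma size_prof t m : size (prof t m) = size t.
Proof. by rewrite size_map size_iota. Qed.

Lemma size_addz t c y : size (addz t c y) = size t.
Proof. by rewrite size_map size_iota. Qed.

Lemma addz_inj t c y y' : size y = size t -> size y' = size t ->
  addz t c y = addz t c y' -> y = y'.
Proof.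
move=> sy sy' e; apply: (@eq_from_nth _ 0); first by rewrite sy sy'.
move=> w; rewrite sy => wt.
have := congr1 (fun q => nth 0 q w) e; rewrite /addz /= !(nth_map 0) ?size_iota //.
rewrite nth_iota // add0n; case: ifP => // _ /eqP; rewrite eqn_add2r => /eqP.
by [].
Qed.

Lemma count_nth_iota (w : seq bool) :
  count (fun a => nth false w a) (iota 0 (size w)) = count id w.
Proof. by rewrite -[in RHS](mkseq_nth false w) /mkseq count_map. Qed.

Lemma cnt_block p z t : 0 < z ->
  cnt (nseq p true ++ nseq z false ++ t) = p.+1 * cnt t.
Proof.
move=> z0.
set g := fun c y => nseq p 0 ++ nseq z c ++ addz t c y.
set B := undup [seq prof t m | m <- masks (size t)].
have sB y : y \in B -> size y = size t.
  by rewrite mem_undup => /mapP[m _ ->]; rewrite size_prof.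
have ginj : {in [seq (x, y) | x <- iota 0 p.+1, y <- B] &, injective (uncurry g)}.
  move=> [c1 y1] [c2 y2] h1 h2.
  have yB : y1 \in B by case/allpairsP: h1 => [[a b] /= [_ hb [_ ->]]].
  have yB' : y2 \in B by case/allpairsP: h2 => [[a b] /= [_ hb [_ ->]]].
  move=> /= e.
  have ec : c1 = c2.
    have := congr1 (fun q => nth 0 q p) e; rewrite /g /=.
    by rewrite !nth_cat !size_nseq ltnn subnn z0 !nth_nseq z0.
  subst c2; congr pair.
  have hd : forall c y, drop (p + z) (g c y) = addz t c y.
    by move=> c y; rewrite /g catA drop_size_cat // size_cat !size_nseq.
  have := congr1 (drop (p + z)) e; rewrite !hd => e2.
  exact: (addz_inj (sB _ yB) (sB _ yB') e2).
rewrite /cnt.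
transitivity (size (undup [seq g x y | x <- iota 0 p.+1, y <- B])).
  apply: size_undup_eqmem => x; apply/mapP/allpairsP.
    case=> m; rewrite mem_masks => /eqP sm ->; rewrite prof_block.
    exists (count (fun a => nth false m a) (iota 0 p), prof t (drop (p + z) m)).
    split; last by [].
      rewrite mem_iota /= add0n ltnS.
      by apply: leq_trans (count_size _ _) _; rewrite size_iota.
    rewrite mem_undup; apply/mapP; exists (drop (p + z) m) => //.
    by rewrite mem_masks size_drop sm !size_cat !size_nseq addnA addKn.
  case=> [[c y] [cin yB ->]].
  move: yB; rewrite mem_undup => /mapP[m2]; rewrite mem_masks => /eqP sm2 ->.
  have cp : c <= p by move: cin; rewrite mem_iota /= ltnS.
  set M := nseq c true ++ nseq (p - c) false ++ nseq z false ++ m2.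
  have sw : size (nseq c true ++ nseq (p - c) false) = p.
    by rewrite size_cat !size_nseq subnKC.
  exists M.
    rewrite mem_masks /M !size_cat !size_nseq sm2; apply/eqP; lia.
  have hd : drop (p + z) M = m2.
    rewrite /M !catA drop_size_cat // !size_cat !size_nseq; lia.
  have hc : count (fun a => nth false M a) (iota 0 p) = c.
    rewrite -[in iota 0 p]sw (eq_in_count (a2 := fun a => nth false (nseq c true ++ nseq (p - c) false) a)).
      by rewrite count_nth_iota count_cat !count_nseq /= mul1n mul0n addn0.
    by move=> a; rewrite mem_iota add0n => /andP[_ ap]; rewrite /M catA nth_cat ap.
  by rewrite prof_block hd hc.
rewrite undup_id; last first.
  by apply: allpairs_uniq => //; [exact: iota_uniq | exact: undup_uniq].
by rewrite size_allpairs size_iota.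
Qed.

Lemma cnt_ones q : cnt (nseq q true) = 1.
Proof.
rewrite /cnt size_nseq (size_undup_eqmem (s2 := [:: nseq q 0])) //.
move=> x; rewrite inE; apply/mapP/eqP => [[m _ ->]|->]; first exact: prof_ones.
by exists (nseq q true); rewrite ?mem_masks ?size_nseq ?prof_ones.
Qed.

Lemma thr_seqS l p z :
  thr_seq l.+1 p z = nseq (p l.+1) true ++ nseq (z l.+1) false ++ thr_seq l p z.
Proof.
rewrite /thr_seq.
have e : iota 1 l.+1 = rcons (iota 1 l) l.+1 by rewrite -cats1 -[in LHS](addn1 l) iotaD add1n.
rewrite e rev_rcons map_cons.
rewrite [flatten (_ :: _)]/=. by rewrite -!catA.
Qed.


Lemma cnt_thr l p z : (forall i, 1 <= i <= l -> 0 < z i) ->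
  cnt (thr_seq l p z) = \prod_(1 <= i < l.+1) (p i).+1.
Proof.
elim: l => [|l IH] hz.
  rewrite (big_geq (leqnn 1)).
  have -> : thr_seq 0 p z = nseq (p 0) true by [].
  exact: cnt_ones.
rewrite thr_seqS cnt_block; last by apply: hz; rewrite leqnn.
rewrite big_nat_recr; last by [].
rewrite IH; first exact: mulnC.
move=> i /andP[i1 il]; apply: hz; by rewrite i1 ltnW.
Qed.

Theorem theorem3p4 (l : nat) (p z : nat -> nat)
  (hz : forall i, 1 <= i <= l -> 0 < z i) :
  num_trans_orient (tadj (thr_seq l p z)) = \prod_(1 <= i < l.+1) (p i).+1.
Proof.
rewrite num_cnt; exact: cnt_thr hz.
Qed.
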